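(* Let $k,m,n,l$ be positive integers with $nl+ml\le k$ and $q$ a prime power. Let $\mathbb{L}$ be the set of $l$-dimensional subspaces of $\mathbb{F}_q^k$ and let $\mathbb{X}=\{\{L_1,\dots,L_n\}\subseteq\mathbb{L}:\dim(L_1+\cdots+L_n)=nl\}$, $\mathbb{Y}=\{\{L_1,\dots,L_m\}\subseteq\mathbb{L}:\dim(L_1+\cdots+L_m)=ml\}$, $\mathbb{Z}=\{\{L_1,\dots,L_{n+m}\}\subseteq\mathbb{L}:\dim(L_1+\cdots+L_{n+m})=(n+m)l\}$. Let $B$ be the bipartite graph with left vertex set $\mathbb{X}$, right vertex set $\mathbb{Y}$, and $X$ adjacent to $Y$ iff $X\cup Y\in\mathbb{Z}$. Put $P=\prod_{i=0}^{l-1}\binom{l-i}{1}_q$, $y_1=\prod_{i=0}^{n-1}\binom{(n-i)l}{l}$, $y_2=\prod_{i=0}^{m-1}\binom{(m-i)l}{l}$. Then $$|\mathbb{X}|=\frac{(l!)^n q^{\frac{n(n-1)l^2}{2}}}{(nl)!\,n!}\cdot\frac{\prod_{i=0}^{nl-1}\binom{k-i}{1}_q}{P^n}\,y_1,\qquad |\mathbb{Y}|=\frac{(l!)^m q^{\frac{m(m-1)l^2}{2}}}{(ml)!\,m!}\cdot\frac{\prod_{i=0}^{ml-1}\binom{k-i}{1}_q}{P^m}\,y_2,$$ and every $X\in\mathbb{X}$ has exactly $$\frac{(l!)^m q^{ml^2\left(\frac{m-1}{2}+n\right)}}{(ml)!\,m!}\cdot\frac{\prod_{i=0}^{ml-1}\binom{k-nl-i}{1}_q}{P^m}\,y_2$$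 neighbours in $B$.
   Context: $\binom{a}{1}_q=\frac{q^a-1}{q-1}$; $\binom{(n-i)l}{l}$ etc. are ordinary binomial coefficients. *)

(* Defs.v *)
From HB Require Import structures.
From mathcomp Require Import all_boot all_order all_algebra all_field.
Set Implicit Arguments. Unset Strict Implicit. Unset Printing Implicit Defensive.
Import Order.TTheory GRing.Theory Num.Theory.

Import VectorInternalTheory.
HB.instance Definition _ (F : finFieldType) (k : nat) :=
  [Finite of {vspace 'rV[F]_k} by <:].

Local Open Scope ring_scope.

(* Gaussian binomial [a choose 1]_q = (q^a - 1)/(q - 1), as a rational. *)
Definition qbin1 (q a : nat) : rat := ((q ^ a)%N%:R - 1) / ((q%:R : rat) - 1).

Section Config.
Variables (F : finFieldType) (k l : nat).

Definition Lsub : {set {vspace 'rV[F]_k}} := [set L | \dim L == l].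

Definition indep_family (n : nat) : {set {set {vspace 'rV[F]_k}}} :=
  [set X : {set {vspace 'rV[F]_k}} |
     [&& X \subset Lsub, #|X| == n & \dim (\sum_(L in X) L)%VS == (n * l)%N]].

Definition Bneighbours (n m : nat) (X : {set {vspace 'rV[F]_k}}) :
    {set {set {vspace 'rV[F]_k}}} :=
  [set Y in indep_family m | X :|: Y \in indep_family (n + m)].
End Config.

(* Main.v *)
Require Import Defs.
From HB Require Import structures.
From mathcomp Require Import all_boot all_order all_algebra all_field.
From mathcomp Require Import zify.
From mathcomp Require Import ring.
Import Order.TTheory GRing.Theory Num.Theory.
Set Implicit Arguments. Unset Strict Implicit. Unset Printing Implicit Defensive.

Lemma card_tuple_cons (T : finType) r (P : pred (r.+1.-tuple T)) :
  #|[set t | P t]| = \sum_(v : T) #|[set t : r.-tuple T | P [tuple of v :: t]]|.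
Proof.
rewrite -sum1_card (partition_big (fun t : r.+1.-tuple T => thead t) predT) //=.
apply: eq_bigr => v _; rewrite -sum1_card.
rewrite (reindex_onto (fun t : r.-tuple T => [tuple of v :: t])
   (fun t : r.+1.-tuple T => [tuple of behead t])) /=.
  apply: eq_bigl => t; rewrite !inE theadE eqxx andbT.
  by case: (P _) => //=; apply/eqP/val_inj.
move=> t /andP[_ /eqP <-]; apply/val_inj => /=.
by case: t => [[|x s] //=].
Qed.

Section Count.
Variables (F : finFieldType) (k : nat).
Local Notation vT := 'rV[F]_k.
Local Notation q := #|F|.

Definition Tv (U S : {vspace vT}) r :=
  [set t : r.-tuple vT | all (fun v => v \in S) t &&
     (\dim (U + <<t>>)%VS == \dim U + r)%N].

Lemma dim_addv_le (U V : {vspace vT}) : (\dim (U + V) <= \dim U + \dim V)%N.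
Proof. exact: (dimv_add_leqif U V). Qed.

Lemma dim_addv_line (U : {vspace vT}) v : v \notin U -> \dim (U + <[v]>) = (\dim U).+1.
Proof.
move=> vU; apply/eqP; rewrite eqn_leq.
have := dim_addv_le U <[v]>; rewrite dim_vline.
have -> : (v != 0%R) by apply: contraNneq vU => ->; rewrite mem0v.
rewrite addn1 => -> /=.
have : U != (U + <[v]>)%VS.
  apply: contraNneq vU => ->; exact: (subvP (addvSr U <[v]>) v (memv_line v)).
by rewrite eqEdim addvSl /= -ltnNge.
Qed.

Lemma cons_cond (U : {vspace vT}) v (t : seq vT) :
  (\dim (U + <<v :: t>>)%VS == \dim U + (size t).+1)%N =
  (v \notin U) && (\dim ((U + <[v]>) + <<t>>)%VS == (\dim U).+1 + size t)%N.
Proof.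
rewrite span_cons addvA.
have h1 := dim_addv_le (U + <[v]>) <<t>>.
have h2 := dim_span t.
case vU: (v \in U) => /=.
  have -> : (U + <[v]> = U)%VS by apply/addv_idPl; rewrite -memvE.
  apply/negbTE; rewrite neq_ltn; apply/orP; left.
  apply: leq_ltn_trans (dim_addv_le U <<t>>) _; by rewrite ltn_add2l ltnS.
rewrite dim_addv_line ?vU // in h1 *; by rewrite addSnnS.
Qed.


Lemma card_vsD (U S : {vspace vT}) : (U <= S)%VS ->
  #|[pred v | (v \in S) && (v \notin U)]| = (q ^ \dim S - q ^ \dim U)%N.
Proof.
move=> sUS; rewrite -!card_vspace -(cardID U S).
have -> : #|[predI S & U]| = #|U|.
  apply: eq_card => v; rewrite !inE; case vU: (v \in U); rewrite ?andbF //.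
  by rewrite (subvP sUS v vU).
rewrite addKn; apply: eq_card => v; by rewrite !inE andbC.
Qed.

Lemma card_Tv (U S : {vspace vT}) r : (U <= S)%VS ->
  #|Tv U S r| = (\prod_(i < r) (q ^ \dim S - q ^ (\dim U + i)))%N.
Proof.
elim: r U => [|r IH] U sUS.
  rewrite big_ord0.
  have -> : Tv U S 0 = setT.
    by apply/setP => t; rewrite !inE tuple0 /= span_nil addv0 addn0 eqxx.
  by rewrite cardsT card_tuple expn0.
rewrite /Tv card_tuple_cons big_ord_recl addn0.
rewrite (bigID (fun v => (v \in S) && (v \notin U))) /=.
rewrite [X in (_ + X)%N]big1 ?addn0; last first.
  move=> v /negbTE Hv; apply/eqP; rewrite cards_eq0; apply/eqP/setP => t.
  rewrite !inE /=; have := cons_cond U v t; rewrite size_tuple => ->.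
  by case: (v \in S) Hv => //= ->; rewrite andbF.
rewrite (eq_bigr (fun _ => \prod_(i < r) (q ^ \dim S - q ^ ((\dim U).+1 + i)))%N).
  rewrite (eq_bigl [pred v | (v \in S) && (v \notin U)]) // sum_nat_const card_vsD //.
  by congr (_ * _)%N; apply: eq_bigr => i _; rewrite /bump add1n addnS.
move=> v /andP[vS vU].
have sUv : (U + <[v]> <= S)%VS by rewrite subv_add sUS -memvE.
rewrite -(dim_addv_line vU) -IH //.
apply: eq_card => t; rewrite !inE /=; have := cons_cond U v t; rewrite size_tuple => ->.
by rewrite vS vU /= dim_addv_line.
Qed.


Variable l : nat.

Definition Lset (U : {vspace vT}) :=
  [set L : {vspace vT} | (\dim L == l) && (\dim (U + L)%VS == \dim U + l)%N].

Lemma card_Lset (U : {vspace vT}) :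
  (#|Lset U| * \prod_(i < l) (q ^ l - q ^ i) =
   \prod_(i < l) (q ^ k - q ^ (\dim U + i)))%N.
Proof.
have <- : #|Tv U fullv l| = (\prod_(i < l) (q ^ k - q ^ (\dim U + i)))%N.
  by rewrite card_Tv ?subvf // dimvf dim_matrix GRing.mul1r.
rewrite -[in RHS]sum1_card (partition_big (fun t : l.-tuple vT => <<t>>%VS) (mem (Lset U))) /=.
  rewrite -sum_nat_const; apply: eq_bigr => L; rewrite inE => /andP[/eqP dL /eqP dUL].
  rewrite (_ : (\prod_(i < l) _)%N = #|Tv 0 L l|); last first.
    by rewrite card_Tv ?sub0v // dimv0 dL.
  rewrite -sum1_card; apply: eq_bigl => t.
  rewrite !inE add0v dimv0 add0n; apply/idP/idP.
    case/andP => [aL /eqP dt].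
    have eL : <<t>>%VS = L.
      apply/eqP; rewrite eqEdim dL dt leqnn andbT.
      by apply/span_subvP => x xt; exact: (allP aL).
    by rewrite eL eqxx dUL eqxx !andbT; apply/allP => x _; exact: memvf.
  move=> /andP[_ /eqP eL]; rewrite eL dL eqxx andbT.
  by apply/allP => x xt; rewrite -eL memv_span.
move=> t; rewrite !inE => /andP[_ /eqP h].
have h1 := dim_addv_le U <<t>>; have h2 := dim_span t; rewrite size_tuple in h2.
rewrite h eqxx andbT; apply/eqP/anti_leq; rewrite h2 /= -(leq_add2l (\dim U)) -h; exact: h1.
Qed.


Definition cond (U : {vspace vT}) (s : seq {vspace vT}) :=
  all (fun x : {vspace vT} => \dim x == l) s &&
  (\dim (U + \sum_(x <- s) x)%VS == \dim U + size s * l)%N.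

Lemma dim_sum_seq (s : seq {vspace vT}) : all (fun x : {vspace vT} => \dim x == l) s ->
  (\dim (\sum_(x <- s) x)%VS <= size s * l)%N.
Proof.
elim: s => [|x s IH] /=; first by rewrite big_nil dimv0.
case/andP => /eqP dx /IH h; rewrite big_cons; apply: leq_trans (dim_addv_le _ _) _.
by rewrite dx mulSn leq_add2l.
Qed.

Lemma cond_cons U x s : cond U (x :: s) =
  [&& \dim x == l, \dim (U + x)%VS == \dim U + l & cond (U + x)%VS s].
Proof.
rewrite /cond /= big_cons addvA; case dx: (\dim x == l) => //=.
case a: (all _ s) => /=; last by rewrite !andbF.
have h1 := dim_addv_le (U + x) (\sum_(y <- s) y); have h2 := dim_sum_seq a.
have h3 := dim_addv_le U x; rewrite (eqP dx) in h3.
apply/idP/idP.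
  move/eqP => h; lia.
by case/andP => /eqP -> /eqP ->; rewrite mulSn addnA.
Qed.

Lemma sum_seq_sup x (s : seq {vspace vT}) : x \in s -> (x <= \sum_(y <- s) y)%VS.
Proof.
elim: s => //= y s IH; rewrite inE big_cons => /orP[/eqP-> | /IH h].
  exact: addvSl.
exact: subv_trans h (addvSr _ _).
Qed.

Lemma cond_uniq (hl : (0 < l)%N) U s : cond U s -> uniq s.
Proof.
elim: s U => [//|x s IH] U; rewrite cond_cons => /and3P[dx dUx cs].
rewrite /= (IH _ cs) andbT; apply/negP => xs.
move: cs; rewrite /cond => /andP[a /eqP].
rewrite -addvA (addv_idPr (sum_seq_sup xs)) (eqP dUx).
have h1 := dim_addv_le U (\sum_(y <- s) y); have h2 := dim_sum_seq a.
lia.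
Qed.


Definition Gs (U : {vspace vT}) j := [set t : j.-tuple {vspace vT} | cond U t].

Definition Tn u := (\prod_(i < l) (q ^ k - q ^ (u + i)))%N.
Definition Bn := (\prod_(i < l) (q ^ l - q ^ i))%N.

Fixpoint g j u : rat :=
  if j is j'.+1 then ((Tn u)%:R / (Bn)%:R * g j' (u + l)%N)%R else 1%R.

Lemma q_gt1 : (1 < q)%N.
Proof. exact: finNzRing_gt1. Qed.

Lemma Bn_gt0 : (0 < Bn)%N.
Proof.
apply: prodn_gt0 => i; rewrite subn_gt0 ltn_exp2l ?ltn_ord //; exact: q_gt1.
Qed.

Lemma card_Gs j U : (#|Gs U j|%:R : rat) = g j (\dim U).
Proof.
elim: j U => [|j IH] U.
  have -> : Gs U 0 = setT.
    by apply/setP => t; rewrite !inE tuple0 /cond /= big_nil addv0 mul0n addn0 eqxx.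
  by rewrite cardsT card_tuple expn0.
rewrite /Gs card_tuple_cons (bigID (mem (Lset U))) /= [X in (_ + X)%N]big1 ?addn0; last first.
  move=> x xL; apply/eqP; rewrite cards_eq0; apply/eqP/setP => t.
  rewrite !inE /= cond_cons; move: xL; rewrite inE negb_and => /orP[] /negbTE -> //.
  by rewrite andbF.
rewrite (eq_bigr (fun x => #|Gs (U + x)%VS j|)); last first.
  move=> x xL; apply: eq_card => t; rewrite !inE /= cond_cons.
  by move: xL; rewrite inE => /andP[-> ->].
rewrite natr_sum (eq_bigr (fun _ => g j (\dim U + l))); last first.
  by move=> x; rewrite inE => /andP[_ /eqP <-]; rewrite IH.
rewrite sumr_const -[in LHS]mulr_natl /=; congr (_ * _)%R.
have := card_Lset U; rewrite -/Bn -/(Tn _) => <-.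
rewrite natrM mulfK //; rewrite pnatr_eq0 -lt0n; exact: Bn_gt0.
Qed.


Definition Ss (U : {vspace vT}) j :=
  [set X : {set {vspace vT}} | [&& X \subset @Lsub F k l, #|X| == j &
     \dim (U + \sum_(L in X) L)%VS == \dim U + j * l]%N].

Lemma sum_set_seq (t : seq {vspace vT}) : uniq t ->
  (\sum_(x in [set x in t]) x = \sum_(x <- t) x)%VS.
Proof. by move=> ut; rewrite big_uniq //; apply: eq_bigl => x; rewrite inE. Qed.

Lemma card_Gs_Ss (hl : (0 < l)%N) U j : #|Gs U j| = (j`! * #|Ss U j|)%N.
Proof.
rewrite -sum1_card (partition_big (fun t : j.-tuple _ => [set x in t]) (mem (Ss U j))) /=.
  rewrite mulnC -sum_nat_const; apply: eq_bigr => X; rewrite inE => /and3P[sXL /eqP cX /eqP dX].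
  have := card_uniq_tuples j (fun x => x \in X).
  have e : #|(fun x => x \in X)| = #|X| by apply: eq_card.
  rewrite e.
  rewrite cX ffactnn => <-; rewrite -sum1_card; apply: eq_bigl => t; rewrite !inE.
  apply/idP/idP.
    case/andP => ct /eqP <-; rewrite (cond_uniq hl ct) andbT.
    by apply/allP => x xt; rewrite inE.
  case/andP => aX ut.
  have eX : [set x in t] = X.
    apply/eqP; rewrite eqEcard; apply/andP; split.
      by apply/subsetP => x; rewrite inE => xt; exact: (allP aX x xt).
    by rewrite cardsE cX (card_uniqP ut) size_tuple.
  rewrite eX eqxx andbT /cond size_tuple -sum_set_seq // eX dX eqxx andbT.
  apply/allP => x xt; have := subsetP sXL x (allP aX x xt); by rewrite inE.
move=> t; rewrite !inE => ct; have ut := cond_uniq hl ct.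
move: ct; rewrite /cond size_tuple -sum_set_seq // => /andP[a ->].
rewrite cardsE (card_uniqP ut) size_tuple eqxx !andbT.
by apply/subsetP => x; rewrite !inE => xt; exact: (allP a x xt).
Qed.


Lemma indep_Ss n : @indep_family F k l n = Ss 0%VS n.
Proof. by apply/setP => X; rewrite !inE add0v dimv0 add0n. Qed.

Lemma dim_sum_set (Y : {set {vspace vT}}) : Y \subset @Lsub F k l ->
  (\dim (\sum_(L in Y) L)%VS <= #|Y| * l)%N.
Proof.
move=> sY; rewrite -big_enum cardE; apply: dim_sum_seq.
by apply/allP => x; rewrite mem_enum => xY; have := subsetP sY x xY; rewrite inE.
Qed.

Lemma Bneigh_Ss (hl : (0 < l)%N) n m X : X \in @indep_family F k l n ->
  @Bneighbours F k l n m X = Ss (\sum_(L in X) L)%VS m.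
Proof.
rewrite inE => /and3P[sX /eqP cX /eqP dX]; apply/setP => Y; rewrite !inE.
rewrite big_setU; last by move=> ?; exact: addvv.
rewrite dX; apply/idP/idP.
  case/andP => [/and3P[sY /eqP cY /eqP dY] /and3P[_ _ /eqP dXY]].
  by rewrite sY cY eqxx /= dXY mulnDl eqxx.
case/and3P => [sY /eqP cY /eqP dXY].
set W := (\sum_(L in X) L)%VS in dX dXY *.
have dY : \dim (\sum_(L in Y) L)%VS = (m * l)%N.
  have h1 := dim_addv_le W (\sum_(L in Y) L); have h2 := dim_sum_set sY.
  rewrite cY in h2; rewrite dX in h1; lia.
have dj : X :&: Y = set0.
  apply/setP => L; rewrite !inE; apply/negP => /andP[LX LY].
  have e : (\sum_(L' in Y) L' = L + \sum_(L' in Y :\ L) L')%VS.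
    rewrite (bigD1 L) //=; apply: f_equal; apply: eq_bigl => x; by rewrite !inE andbC.
  have LW : (L <= W)%VS by exact: (sumv_sup L LX (subvv L)).
  move: dXY; rewrite e addvA (addv_idPl LW).
  have sY' : Y :\ L \subset @Lsub F k l by apply: subset_trans sY; exact: subsetDl.
  have h1 := dim_addv_le W (\sum_(L' in Y :\ L) L'); have h2 := dim_sum_set sY'.
  have c' := cardsD1 L Y; rewrite LY cY in c'.
  rewrite dX in h1; nia.
rewrite sY cY eqxx dY /= dXY eqxx subUset sX sY /= cardsU dj cards0 cX cY subn0.
by rewrite eqxx /= mulnDl.
Qed.


Local Open Scope ring_scope.
Local Notation Q := (q%:R : rat).

Lemma q_neq1 : q != 1%N.
Proof. by rewrite neq_ltn q_gt1 orbT. Qed.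

Lemma q_gt0 : (0 < q)%N.
Proof. exact: ltn_trans q_gt1. Qed.

Lemma Q1_neq0 : Q - 1 != 0.
Proof. by rewrite subr_eq0 pnatr_eq1 q_neq1. Qed.

Lemma qbin1_neq0 a : (0 < a)%N -> qbin1 q a != 0.
Proof.
move=> a0; rewrite /qbin1 mulf_eq0 invr_eq0 negb_or Q1_neq0 andbT.
by rewrite subr_eq0 pnatr_eq1 -(expn0 q) eqn_exp2l ?(negbTE (lt0n_neq0 a0)) // q_gt1.
Qed.

Definition Pq := \prod_(i < l) qbin1 q (l - i).

Lemma Pq_neq0 : Pq != 0.
Proof. by apply/prodf_neq0 => i _; apply: qbin1_neq0; rewrite subn_gt0. Qed.

Lemma term_eq a b : (b <= a)%N ->
  ((q ^ a - q ^ b)%N%:R : rat) = Q ^+ b * (Q - 1) * qbin1 q (a - b).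
Proof.
move=> ba; rewrite natrB ?leq_pexp2l ?q_gt0 //.
have -> : (q ^ a = q ^ b * q ^ (a - b))%N by rewrite -expnD subnKC.
rewrite /qbin1 !natrM !natrX; have := Q1_neq0 => h; field => //.
Qed.

Lemma TB u : (u + l <= k)%N ->
  (Tn u)%:R / (Bn%:R) = (q ^ (u * l))%N%:R * \prod_(i < l) qbin1 q (k - u - i) / Pq.
Proof.
move=> hul.
have eT : (Tn u)%:R = (Q ^+ u) ^+ l * \prod_(i < l) Q ^+ i * (Q - 1) ^+ l
                      * \prod_(i < l) qbin1 q (k - u - i).
  rewrite /Tn natr_prod (eq_bigr (fun i : 'I_l => Q ^+ u * Q ^+ i * (Q - 1) * qbin1 q (k - u - i))).
    by rewrite !big_split /= !prodr_const !card_ord.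
  move=> i _; rewrite term_eq ?exprD ?subnDA //.
  by apply: leq_trans hul; rewrite leq_add2l ltnW.
have eB : (Bn)%:R = \prod_(i < l) Q ^+ i * (Q - 1) ^+ l * Pq.
  rewrite /Bn natr_prod (eq_bigr (fun i : 'I_l => Q ^+ i * (Q - 1) * qbin1 q (l - i))).
    by rewrite big_split big_split /= !prodr_const !card_ord.
  by move=> i _; rewrite term_eq // ltnW.
have h1 : \prod_(i < l) Q ^+ i != 0.
  by apply/prodf_neq0 => i _; rewrite expf_neq0 // pnatr_eq0 -lt0n q_gt0.
have h2 := Q1_neq0; have h3 := Pq_neq0.
rewrite eT eB natrX exprM; field.
by rewrite h1 h3 expf_neq0.
Qed.


Lemma g_closed j u : (u + j * l <= k)%N ->
  g j u = (q ^ (j * u * l + 'C(j, 2) * l ^ 2))%N%:R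
          * \prod_(i < j * l) qbin1 q (k - u - i) / Pq ^+ j.
Proof.
elim: j u => [|j IH] u h.
  by rewrite /= big_ord0 expr0 bin0n /= !mul0n expn0 invr1 !mulr1.
rewrite /= IH; last by rewrite -addnA -mulSn.
rewrite TB; last by apply: leq_trans h; rewrite leq_add2l mulSn leq_addr.
have sp : \prod_(i < j.+1 * l) qbin1 q (k - u - i) =
    \prod_(i < l) qbin1 q (k - u - i) * \prod_(i < j * l) qbin1 q (k - (u + l) - i).
  rewrite mulSn big_split_ord /=; congr (_ * _); apply: eq_bigr => i _.
  by rewrite !subnDA.
have ee : (j.+1 * u * l + 'C(j.+1, 2) * l ^ 2 =
           u * l + (j * (u + l) * l + 'C(j, 2) * l ^ 2))%N.
  rewrite binS bin1; nia.
rewrite sp exprS ee !expnD !natrM; have := Pq_neq0 => hP; field.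
by rewrite hP expf_neq0.
Qed.

Lemma y_eq n : ((\prod_(i < n) 'C((n - i) * l, l)) * (l`!) ^ n = (n * l)`!)%N.
Proof.
elim: n => [|n IH]; first by rewrite big_ord0.
rewrite big_ord_recl subn0 expnS mulnCA -mulnA.
rewrite (eq_bigr (fun i : 'I_n => 'C((n - i) * l, l))); last first.
  by move=> i _; rewrite lift0 subSS.
transitivity (l`! * 'C(n.+1 * l, l) * (n * l)`!)%N; first by rewrite -IH; ring.
rewrite mulSn; have := bin_fact (leq_addr (n * l) l); rewrite addKn => <-; ring.
Qed.

End Count.

Import GRing.Theory.
Local Open Scope ring_scope.

Lemma card_Ss (F : finFieldType) (k l : nat) (hl : (0 < l)%N) (U : {vspace 'rV[F]_k}) j :
  (\dim U + j * l <= k)%N ->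
  ((j`! * #|Ss l U j|)%N%:R : rat) =
  ((#|F| ^ (j * \dim U * l + 'C(j, 2) * l ^ 2))%N%:R
   * \prod_(i < j * l) qbin1 #|F| (k - \dim U - i) / Pq F l ^+ j)%R.
Proof. by move=> h; rewrite -card_Gs_Ss // card_Gs g_closed. Qed.

Lemma card_Ss' (F : finFieldType) (k l : nat) (hl : (0 < l)%N) (U : {vspace 'rV[F]_k}) j d :
  \dim U = d -> (d + j * l <= k)%N ->
  ((j`! * #|Ss l U j|)%N%:R : rat) =
  ((#|F| ^ (j * d * l + 'C(j, 2) * l ^ 2))%N%:R
   * \prod_(i < j * l) qbin1 #|F| (k - d - i) / Pq F l ^+ j)%R.
Proof. by move=> <- h; apply: card_Ss. Qed.

Lemma final_arith (F : finFieldType) (l n S E : nat) (Pi : rat) :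
  ((n`! * S)%N%:R = (#|F| ^ E)%N%:R * Pi / Pq F l ^+ n)%R ->
  (S%:R = ((l`! ^ n)%N%:R * (#|F| ^ E)%N%:R) / ((n * l)`! * n`!)%N%:R
     * (Pi / Pq F l ^+ n) * (\prod_(i < n) 'C((n - i) * l, l))%N%:R)%R.
Proof.
move=> h; rewrite -(y_eq l n).
have hn : (n`!)%:R != 0 :> rat by rewrite pnatr_eq0 -lt0n fact_gt0.
have hS : (S%:R = (#|F| ^ E)%N%:R * Pi / Pq F l ^+ n / (n`!)%:R :> rat)%R.
  by rewrite -h natrM mulrC mulKf.
have hP := Pq_neq0 F l.
have hY : (\prod_(i < n) 'C((n - i) * l, l))%N%:R != 0 :> rat.
  rewrite pnatr_eq0 -lt0n; have := fact_gt0 (n * l); rewrite -(y_eq l n).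
  by rewrite muln_gt0 => /andP[].
have hL : (l`! ^ n)%N%:R != 0 :> rat by rewrite pnatr_eq0 -lt0n expn_gt0 fact_gt0.
rewrite hS !natrM; field.
by rewrite expf_neq0 // hn hY hL.
Qed.

Import Order.TTheory GRing.Theory Num.Theory.
Unset Implicit Arguments.

Theorem lemma12 (F : finFieldType) (k m n l : nat)
  (hk : (0 < k)%N) (hm : (0 < m)%N) (hn : (0 < n)%N) (hl : (0 < l)%N)
  (hnml : (n * l + m * l <= k)%N) :
  let q := #|F| in
  let P : rat := \prod_(i < l) qbin1 q (l - i) in
  let y1 : rat := (\prod_(i < n) 'C((n - i) * l, l))%N%:R in
  let y2 : rat := (\prod_(i < m) 'C((m - i) * l, l))%N%:R in
  [/\ (#|@indep_family F k l n|%:R : rat) =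
        ((l`! ^ n)%N%:R * (q ^ ((n * (n - 1)) %/ 2 * l ^ 2))%N%:R)
          / ((n * l)`! * n`!)%N%:R
        * ((\prod_(i < n * l) qbin1 q (k - i)) / P ^+ n) * y1,
      (#|@indep_family F k l m|%:R : rat) =
        ((l`! ^ m)%N%:R * (q ^ ((m * (m - 1)) %/ 2 * l ^ 2))%N%:R)
          / ((m * l)`! * m`!)%N%:R
        * ((\prod_(i < m * l) qbin1 q (k - i)) / P ^+ m) * y2
    & forall X, X \in @indep_family F k l n ->
      (#|@Bneighbours F k l n m X|%:R : rat) =
        ((l`! ^ m)%N%:R
           * (q ^ ((m * (m - 1)) %/ 2 * l ^ 2 + m * n * l ^ 2))%N%:R)
          / ((m * l)`! * m`!)%N%:R
        * ((\prod_(i < m * l) qbin1 q (k - n * l - i)) / P ^+ m) * y2].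
Proof.
move=> q P y1 y2.
have base : forall j, (j * l <= k)%N ->
    ((j`! * #|@indep_family F k l j|)%N%:R : rat) =
    (q ^ ((j * (j - 1)) %/ 2 * l ^ 2))%N%:R * (\prod_(i < j * l) qbin1 q (k - i)) / P ^+ j.
  move=> j hj; rewrite indep_Ss card_Ss ?dimv0 ?add0n //.
  rewrite muln0 mul0n add0n bin2 -divn2 subn1.
  by congr (_ * _ / _); apply: eq_bigr => i _; rewrite subn0.
split.
- apply: final_arith; rewrite base //; apply: leq_trans hnml; exact: leq_addr.
- apply: final_arith; rewrite base //; apply: leq_trans hnml; exact: leq_addl.
move=> X hX; rewrite Bneigh_Ss //; apply: final_arith.
move: hX; rewrite inE => /and3P[_ _ /eqP dX].
rewrite (card_Ss' hl dX) //.
rewrite bin2 -divn2 subn1 addnC.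
congr ((q ^ (_ + _))%N%:R * _ / _); ring.
Qed.
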